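(* Let $I\subset F$ be a graded two-sided ideal and $J=L(I)\subset R$. For every $d\ge0$, $\iota(I_d)=J(d)_d$, where $J(d)=J\cap R(d)$. In particular $\dim_{\mathbb K}I_d=\dim_{\mathbb K}J(d)_d$.
   Context: Let $\mathbb K$ be a field and $F=\mathbb K\langle x_1,\dots,x_n\rangle$ the free associative algebra with standard grading; $I_d=I\cap F_d$. Let $P=\mathbb K[x_{ij}\mid 1\le i\le n,\ j\ge1]$ be the commutative polynomial ring with $\deg x_{ij}=1$, $Q\subset P$ the ideal generated by all $x_{ij}x_{kj}$ ($1\le i,k\le n$, $j\ge1$), and $R=P/Q$. Let $\sigma:R\to R$ be the algebra endomorphism $x_{ij}\mapsto x_{i,j+1}$. Let $\iota:F\to R$ be the $\mathbb K$-linear map sending each word $x_{i_1}\cdots x_{i_d}$ to $x_{i_1 1}x_{i_2 2}\cdots x_{i_d d}$. For $d\ge0$, $R(d)$ is the subalgebra of $R$ generated by the $x_{ij}$ with $j\le d$ (i.e. $P(d)/(Q\cap P(d))$ with $P(d)=\mathbb K[x_{ij}\mid j\le d]$). For a graded two-sided ideal $I\subset F$, its letterplace analogue $L(I)$ is the ideal of $R$ generated by $\bigcup_{k\ge0}\sigma^k(\iota(I))$. *)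

(* Defs.v *)
From HB Require Import structures.
From mathcomp Require Import all_boot all_order all_algebra.
Set Implicit Arguments. Unset Strict Implicit. Unset Printing Implicit Defensive.
Import GRing.Theory.
Local Open Scope ring_scope.

Section Letterplace.
Variables (K : fieldType) (n : nat).

(* A word x_{i_1}...x_{i_d} is a sequence of letters in 'I_n; an element
   of F is its coefficient function, required to have finite support.   *)
Definition word := seq 'I_n.
Definition fpoly := word -> K.

Definition is_F (f : fpoly) : Prop :=
  exists s : seq word, forall w, w \notin s -> f w = 0.

Definition fmul (f g : fpoly) : fpoly :=
  fun w => \sum_(k < (size w).+1) f (take k w) * g (drop k w).

Definition fhom (d : nat) (f : fpoly) : fpoly :=
  fun w => if size w == d then f w else 0.

Definition homogF (d : nat) (f : fpoly) : Prop :=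
  forall w, f w != 0 -> size w = d.

Definition graded_ideal (I : fpoly -> Prop) : Prop :=
  [/\ (forall f, I f -> is_F f),
      I (fun _ => 0),
      (forall f g, I f -> I g -> I (fun w => f w + g w)),
      (forall f g, is_F g -> I f -> I (fmul g f) /\ I (fmul f g))
    & (forall f d, I f -> I (fhom d f))].

(* The variable x_{i,j} (1 <= j) is encoded as the pair (i, j-1).
   A commutative monomial is a sequence of variables taken up to
   permutation; an element of P is its coefficient function, required to
   be a finite formal sum of monomials.                                 *)
Definition var := ('I_n * nat)%type.
Definition mono := seq var.
Definition ppoly := mono -> K.

Definition is_poly (p : ppoly) : Prop :=
  exists s : seq (K * mono),
    forall m, p m = \sum_(t <- s | perm_eq t.2 m) t.1.

Definition mono_poly (u : mono) : ppoly :=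
  fun m => if perm_eq u m then 1 else 0.

Definition mdivides (u m : mono) : bool :=
  all (fun v => (count_mem v u <= count_mem v m)%N) u.
Definition mdiff (m u : mono) : mono := foldr (fun v acc => rem v acc) m u.

Definition mulmono (u : mono) (p : ppoly) : ppoly :=
  fun m => if mdivides u m then p (mdiff m u) else 0.

Fixpoint all_in (T : Type) (P : T -> Prop) (l : seq T) : Prop :=
  match l with [::] => True | x :: l' => P x /\ all_in P l' end.

Definition genP (S : ppoly -> Prop) (p : ppoly) : Prop :=
  exists l : seq (K * mono * ppoly),
    all_in (fun t => S t.2) l /\
    forall m, p m = \sum_(t <- l) t.1.1 * mulmono t.1.2 t.2 m.

Definition Qgen (g : ppoly) : Prop :=
  exists (i k : 'I_n) (j : nat), g = mono_poly [:: (i, j); (k, j)].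
Definition Qideal : ppoly -> Prop := genP Qgen.

(* congruence modulo Q: p and q define the same element of R = P/Q *)
Definition eqQ (p q : ppoly) : Prop := Qideal (fun m => p m - q m).

(* the shift sigma : x_{ij} |-> x_{i,j+1} (lifted to P) *)
Definition sigma (p : ppoly) : ppoly :=
  fun m => if all (fun v : var => (0 < v.2)%N) m
           then p [seq (v.1, v.2.-1) | v <- m] else 0.

(* iota : x_{i_1}...x_{i_d} |-> x_{i_1 1} ... x_{i_d d} (lifted to P) *)
Definition iotaLP (f : fpoly) : ppoly :=
  fun m => \sum_(w : (size m).-tuple 'I_n
                 | perm_eq (zip (tval w) (iota 0 (size m))) m) f w.

(* preimage in P of L(I): the ideal generated by Q and all sigma^k(iota(I)) *)
Definition LIpre (I : fpoly -> Prop) : ppoly -> Prop :=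
  genP (fun g => Qgen g \/ exists (k : nat) (f : fpoly),
                              I f /\ g = iter k sigma (iotaLP f)).

(* P(d)_d : homogeneous of degree d, only variables x_{ij} with j <= d *)
Definition inPdd (d : nat) (p : ppoly) : Prop :=
  is_poly p /\
  forall m, p m != 0 -> size m = d /\ all (fun v : var => (v.2 < d)%N) m.

End Letterplace.

(* Main.v *)
Require Import Defs.
From HB Require Import structures.
From mathcomp Require Import all_boot all_order all_algebra.
From Stdlib Require Import FunctionalExtensionality.
Set Implicit Arguments. Unset Strict Implicit. Unset Printing Implicit Defensive.
Import GRing.Theory.

Lemma permE' (T : eqType) (s t : seq T) :
  perm_eq s t <-> forall x, count_mem x s = count_mem x t.
Proof.
split; first by move/permP=> H x; apply: H.
move=> H; rewrite /perm_eq; apply/allP=> x _ /=; by rewrite H.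
Qed.

Section L.
Variables (K : fieldType) (n : nat).

Lemma count_mdiff (x : var n) (m u : mono n) :
  count_mem x (mdiff m u) = (count_mem x m - count_mem x u)%N.
Proof.
elim: u => [|v u IH] /=; first by rewrite subn0.
rewrite count_mem_rem IH -subnDA addnC; congr (_ - (_ + _))%N; by rewrite eq_sym.
Qed.

Lemma mdividesP (u m : mono n) :
  mdivides u m <-> forall x, (count_mem x u <= count_mem x m)%N.
Proof.
split.
  move/allP=> H x; case xu: (x \in u); first exact: H.
  by move: xu; rewrite -has_pred1 has_count; case: (count _ u).
move=> H; apply/allP=> x _; exact: H.
Qed.

Lemma PL (v u m : mono n) :
  perm_eq (v ++ u) m <-> mdivides u m /\ perm_eq v (mdiff m u).
Proof.
split.
  move/permE'=> H; split; [apply/mdividesP=> x | apply/permE'=> x];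
    have := H x; rewrite count_cat ?count_mdiff => <-.
    by rewrite leq_addl.
  by rewrite addnK.
move=> [/mdividesP H1 /permE' H2]; apply/permE'=> x.
by rewrite count_cat H2 count_mdiff subnK.
Qed.

End L.
Require Import Defs.
From HB Require Import structures.
From mathcomp Require Import all_boot all_order all_algebra.
From Stdlib Require Import Classical FunctionalExtensionality.
Set Implicit Arguments. Unset Strict Implicit. Unset Printing Implicit Defensive.

Lemma mem_zip_iota (T : eqType) (x : seq T) s (a : T) i :
  ((a, i) \in zip x (iota s (size x))) = (s <= i < s + size x) && (nth a x (i - s) == a).
Proof.
elim: x s => [|y x IH] s /=; first by rewrite addn0 ltnNge andbN.
rewrite in_cons IH xpair_eqE; case: (ltngtP i s) => [lt|gt|->].
- by rewrite andbF.
- by rewrite andbF /= addSnnS -(subnSK gt).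
- by rewrite andbT subnn /= orbF addnS ltnS leq_addr eq_sym.
Qed.

Lemma zip_iota_inj (T : eqType) (x w : seq T) s :
  size x = size w ->
  {subset zip x (iota s (size x)) <= zip w (iota s (size w))} -> x = w.
Proof.
case: x => [|y x'] Hs Hsub; first by move: Hs; case: w Hsub.
set x := y :: x'.
apply: (eq_from_nth (x0:=y)) => // i lti.
have : (nth y x i, s + i) \in zip x (iota s (size x)).
  by rewrite mem_zip_iota leq_addr ltn_add2l lti addKn /= (set_nth_default y).
move/Hsub; rewrite mem_zip_iota => /andP[_]; rewrite addKn => /eqP <-.
by apply: set_nth_default; rewrite -Hs.
Qed.

Section L2.
Variables (K : fieldType) (n : nat).
Local Open Scope ring_scope.

Lemma size_zip_iota (T : Type) (x : seq T) s : size (zip x (iota s (size x))) = size x.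
Proof. by rewrite size_zip size_iota minnn. Qed.

Lemma iota_at (f : fpoly K n) (x : word n) (m : mono n) :
  perm_eq (zip x (iota 0 (size x))) m -> iotaLP f m = f x.
Proof.
move=> Hp; rewrite /iotaLP.
have Hsz : size m = size x by rewrite -(perm_size Hp) size_zip_iota.
have Hx : size x == size m by rewrite Hsz.
rewrite (big_pred1 (Tuple Hx)) //= => t /=.
apply/idP/eqP => [Ht|->] /=; last by rewrite Hsz.
apply: val_inj => /=; apply: (@zip_iota_inj _ _ _ 0%N); first by rewrite size_tuple.
move=> z; rewrite size_tuple => zt.
by rewrite (perm_mem Hp) -(perm_mem Ht).
Qed.

Lemma iota_nz (f : fpoly K n) (m : mono n) :
  iotaLP f m != 0 -> exists x : word n,
    [/\ size x = size m, perm_eq (zip x (iota 0 (size x))) m & f x != 0].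
Proof.
move=> H; apply/not_all_not_ex => Hn; move: H; rewrite /iotaLP big1 ?eqxx // => t Ht.
apply/eqP; apply/negPn/negP => Hf; apply: (Hn (tval t)); split => //.
  by rewrite size_tuple.
by rewrite size_tuple.
Qed.
End L2.
Require Import Defs.
From HB Require Import structures.
From mathcomp Require Import all_boot all_order all_algebra zify.
From Stdlib Require Import Classical FunctionalExtensionality.
Set Implicit Arguments. Unset Strict Implicit. Unset Printing Implicit Defensive.
Section L3.
Variables (K : fieldType) (n : nat).
Local Open Scope ring_scope.

Lemma iter_sigma (k : nat) (p : ppoly K n) (M : mono n) :
  iter k (@sigma K n) p M =
  if all (fun v : var n => (k <= v.2)%N) M then p [seq (v.1, v.2 - k)%N | v <- M] else 0.
Proof.
elim: k M => [|k IH] M /=.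
  rewrite (eq_all (a2 := predT)) ?all_predT; last by [].
  by congr p; rewrite map_id_in // => -[a b] _ /=; rewrite subn0.
rewrite {1}/sigma IH all_map -map_comp.
case: (boolP (all _ M)) => H0.
  have -> : all (preim (fun v : var n => (v.1, v.2.-1)) (fun v : var n => k <= v.2)%N) M
          = all (fun v : var n => k < v.2)%N M.
    apply: eq_in_all => v vM /=; move/allP: H0 => /(_ v vM) /=; lia.
  case: ifP => // _; congr p; apply: eq_map => v /=; congr pair; lia.
case: ifP => // H1; case/negP: H0.
by apply/allP => v vM; move/allP: H1 => /(_ v vM) /=; lia.
Qed.
End L3.
Require Import Defs.
From HB Require Import structures.
From mathcomp Require Import all_boot all_order all_algebra zify.
From Stdlib Require Import Classical FunctionalExtensionality.
Set Implicit Arguments. Unset Strict Implicit. Unset Printing Implicit Defensive.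

Lemma zip_split (T : Type) (w : seq T) s k : (k <= size w)%N ->
  zip w (iota s (size w)) =
  zip (take k w) (iota s k) ++ zip (drop k w) (iota (s + k) (size w - k)).
Proof.
move=> Hk; rewrite -[in iota s (size w)](subnKC Hk) iotaD -{1}(cat_take_drop k w) zip_cat //.
by rewrite size_takel // size_iota.
Qed.

Lemma map_shift_zip (T : Type) (x : seq T) k s e :
  [seq (v.1, v.2 - k)%N | v <- zip x (iota (k + s) e)] = zip x (iota s e).
Proof.
elim: x s e => [|a x IH] s [|e] //=.
by rewrite addKn -addnS IH.
Qed.

Lemma map_unshift_zip (T : Type) (x : seq T) k s e :
  [seq (v.1, v.2 + k)%N | v <- zip x (iota s e)] = zip x (iota (s + k) e).
Proof.
elim: x s e => [|a x IH] s [|e] //=.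
by rewrite IH addSn.
Qed.

Lemma all_zip_iota (T : Type) (x : seq T) s e t : (t <= s)%N ->
  all (fun v : T * nat => t <= v.2)%N (zip x (iota s e)).
Proof.
elim: x s e => [|a x IH] s [|e] //= ts.
by rewrite ts IH // ltnW // ltnS.
Qed.

Lemma zip_split3 (T : Type) (w : seq T) k e : (k + e <= size w)%N ->
  zip w (iota 0 (size w)) =
  zip (take k w) (iota 0 k) ++ zip (take e (drop k w)) (iota k e) ++
  zip (drop (k + e) w) (iota (k + e) (size w - (k + e))).
Proof.
move=> Hke; rewrite (zip_split 0 (k:=k)); last by lia.
rewrite -(size_drop k w) (zip_split _ (k:=e)); last by rewrite size_drop; lia.
rewrite drop_drop size_drop add0n (addnC e k) subnDA; done.
Qed.

Section Core.
Variables (K : fieldType) (n : nat).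
Local Open Scope ring_scope.

Lemma NZ (w : seq 'I_n) (u : mono n) k (f0 : fpoly K n) :
  mulmono u (iter k (@sigma K n) (iotaLP f0)) (zip w (iota 0 (size w))) != 0 ->
  exists w' : seq 'I_n, [/\ size w' = (size w - size u)%N, (size u <= size w)%N &
     perm_eq (zip w (iota 0 (size w))) (zip w' (iota k (size w')) ++ u)].
Proof.
set m := zip w _; rewrite /mulmono; case: ifP => [Hdiv|]; last by rewrite eqxx.
set M := mdiff m u.
have HM : perm_eq (M ++ u) m by apply/PL; split.
rewrite iter_sigma; case: ifP => [Hall|]; last by rewrite eqxx.
case/iota_nz => x [Hsx Hp _].
have HsM : size m = (size M + size u)%N by rewrite -(perm_size HM) size_cat.
have Hm : size m = size w by rewrite /m size_zip_iota.
have Hx : size x = size M by rewrite Hsx size_map.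
exists x; split; [lia | lia |].
have HM' : M = [seq (v.1, v.2 + k)%N | v <- [seq (v.1, v.2 - k)%N | v <- M]].
  rewrite -map_comp map_id_in // => -[a i] /= aM; congr pair.
  by move/allP: Hall => /(_ _ aM) /=; lia.
rewrite perm_sym in Hp.
have := @perm_map _ _ (fun v : var n => (v.1, v.2 + k)%N) _ _ Hp.
rewrite map_unshift_zip add0n -HM' => HM2.
rewrite perm_sym in HM; apply: (perm_trans HM); by rewrite perm_cat2r.
Qed.

Lemma NZa (w w' : seq 'I_n) (u : mono n) k :
  perm_eq (zip w (iota 0 (size w))) (zip w' (iota k (size w')) ++ u) ->
  ((0 < size w') -> k + size w' <= size w)%N /\
  ((k + size w' <= size w)%N ->
     w' = take (size w') (drop k w) /\
     perm_eq u (zip (take k w) (iota 0 k) ++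
                zip (drop (k + size w') w) (iota (k + size w') (size w - (k + size w'))))).
Proof.
move=> Hp; split.
  case: w' Hp => [|y w'] Hp //= _.
  have : (nth y (y :: w') (size w'), (k + size w')%N) \in zip (y :: w') (iota k (size (y :: w'))).
    by rewrite mem_zip_iota /= leq_addr addnS ltnS leqnn addKn /= (set_nth_default y) //.
  move=> H; have : (nth y (y :: w') (size w'), (k + size w')%N) \in zip w (iota 0 (size w)).
    by rewrite (perm_mem Hp) mem_cat H.
  rewrite mem_zip_iota => /andP[/andP[_ h] _]; by rewrite addnS; rewrite add0n in h.
move=> Hke.
have Hw' : w' = take (size w') (drop k w).
  apply: (@zip_iota_inj _ _ _ k); first by rewrite size_takel // size_drop leq_subRL // (leq_trans (leq_addr _ _) Hke).
  move=> [a i] zi.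
  have zm : (a, i) \in zip w (iota 0 (size w)) by rewrite (perm_mem Hp) mem_cat zi.
  move: zi zm; rewrite !mem_zip_iota => /andP[/andP[h1 h2] _] /andP[/andP[_ h4] /eqP h5].
  rewrite size_takel; last by rewrite size_drop leq_subRL // (leq_trans (leq_addr _ _) Hke).
  have h2' : ((i : nat) - k < @size 'I_n w')%N.
    by rewrite ltn_subLR.
  rewrite h1 h2 /= nth_take //.
  by rewrite nth_drop subnKC // -{2}h5 subn0.
split => //.
move: Hp; rewrite (zip_split3 Hke) -Hw' perm_catCA perm_cat2l perm_sym; done.
Qed.

Lemma VD (w : seq 'I_n) (u : mono n) k (f0 : fpoly K n) e :
  (k + e <= size w)%N ->
  perm_eq u (zip (take k w) (iota 0 k) ++ zip (drop (k + e) w) (iota (k + e) (size w - (k + e)))) ->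
  mulmono u (iter k (@sigma K n) (iotaLP f0)) (zip w (iota 0 (size w))) = f0 (take e (drop k w)).
Proof.
move=> Hke Hu; set mid := take e (drop k w).
have Hmid : size mid = e by rewrite size_takel // size_drop; lia.
have Hp : perm_eq (zip mid (iota k e) ++ u) (zip w (iota 0 (size w))).
  by rewrite (zip_split3 Hke) perm_sym perm_catCA perm_cat2l perm_sym.
case/PL: Hp => Hdiv HZ; rewrite /mulmono Hdiv iter_sigma.
rewrite -(perm_all _ HZ) all_zip_iota //.
apply: iota_at; rewrite Hmid -(map_shift_zip mid k 0 e) addn0 perm_sym.
by apply: perm_map; rewrite perm_sym.
Qed.

Definition Ufun (w : seq 'I_n) k e : mono n :=
  zip (take k w) (iota 0 k) ++ zip (drop (k + e) w) (iota (k + e) (size w - (k + e))).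

Lemma Vformula (w : seq 'I_n) (u : mono n) k (f0 : fpoly K n) :
  (k <= size u)%N -> (size u <= size w)%N ->
  mulmono u (iter k (@sigma K n) (iotaLP f0)) (zip w (iota 0 (size w))) =
  if perm_eq u (Ufun w k (size w - size u)) then f0 (take (size w - size u) (drop k w)) else 0.
Proof.
move=> h1 h2; case: ifP => H; first by apply: VD => //; lia.
apply/eqP; apply/negPn/negP => /NZ [w' [Hs Hu Hp]].
have [_ Hb] := NZa Hp; have [_] := Hb ltac:(lia).
by rewrite Hs /Ufun H.
Qed.

Lemma V_big (w : seq 'I_n) (u : mono n) k (f0 : fpoly K n) :
  (size w < size u)%N ->
  mulmono u (iter k (@sigma K n) (iotaLP f0)) (zip w (iota 0 (size w))) = 0.
Proof.
move=> h; apply/eqP; apply/negPn/negP => /NZ [w' [Hs Hu Hp]]; lia.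
Qed.

Lemma V_kbig (w : seq 'I_n) (u : mono n) k (f0 : fpoly K n) :
  (size u < size w)%N -> (size u < k)%N ->
  mulmono u (iter k (@sigma K n) (iotaLP f0)) (zip w (iota 0 (size w))) = 0.
Proof.
move=> h1 h2; apply/eqP; apply/negPn/negP => /NZ [w' [Hs Hu Hp]].
have [Ha _] := NZa Hp; have := Ha ltac:(lia); lia.
Qed.

Lemma V_e0 (w : seq 'I_n) (u : mono n) k k' (f0 : fpoly K n) :
  size u = size w ->
  mulmono u (iter k (@sigma K n) (iotaLP f0)) (zip w (iota 0 (size w))) =
  mulmono u (iter k' (@sigma K n) (iotaLP f0)) (zip w (iota 0 (size w))).
Proof.
move=> Hs; rewrite /mulmono; case: ifP => // Hdiv.
have : perm_eq (mdiff (zip w (iota 0 (size w))) u ++ u) (zip w (iota 0 (size w))).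
  by apply/PL; split.
move/perm_size; rewrite size_cat size_zip_iota Hs.
case: (mdiff _ _) => [|a l] /=; last by lia.
by rewrite !iter_sigma.
Qed.

End Core.

Section FP.
Variables (K : fieldType) (n : nat).
Local Open Scope ring_scope.

Definition dl (c : K) (a : seq 'I_n) : fpoly K n := fun x => if x == a then c else 0.

Lemma is_F_dl c a : is_F (dl c a).
Proof. by exists [:: a] => w; rewrite inE /dl => /negbTE ->. Qed.

Lemma sum_single (F : nat -> K) N i0 :
  (forall i, (i < N)%N -> i != i0 -> F i = 0) ->
  \sum_(i < N) F i = if (i0 < N)%N then F i0 else 0.
Proof.
move=> HF; case: ifP => H.
  rewrite (bigD1 (Ordinal H)) //= big1 ?addr0 //.
  move=> i ne; apply: HF; first exact: ltn_ord.
  by apply: contra ne => /eqP E; apply/eqP; apply: val_inj.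
apply: big1 => i _; apply: HF => //.
by apply/eqP => E; rewrite -E ltn_ord in H.
Qed.

Lemma fmul_dl_l c a (f : fpoly K n) x :
  fmul (dl c a) f x = if take (size a) x == a then c * f (drop (size a) x) else 0.
Proof.
rewrite /fmul (@sum_single (fun i => dl c a (take i x) * f (drop i x)) _ (size a)).
  case: ifP => H; first by rewrite /dl; case: eqP => _; rewrite ?mul0r.
  have Hx : (size x < size a)%N by rewrite ltnNge -ltnS H.
  rewrite take_oversize; last exact: ltnW.
  have -> : (x == a) = false by apply/negbTE; apply/eqP => E; rewrite E ltnn in Hx.
  by [].
move=> i lt ne; rewrite /dl; case: eqP => [E|]; last by rewrite mul0r.
by move: ne; rewrite -E size_takel ?eqxx // -ltnS.
Qed.

Lemma fmul_dl_r c b (f : fpoly K n) x :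
  fmul f (dl c b) x =
  if drop (size x - size b)%N x == b then f (take (size x - size b)%N x) * c else 0.
Proof.
rewrite /fmul (@sum_single (fun i => f (take i x) * dl c b (drop i x)) _ (size x - size b)%N).
  by rewrite ltnS leq_subr /dl; case: eqP => _; rewrite ?mulr0.
move=> i lt ne; rewrite /dl; case: eqP => [E|]; last by rewrite mulr0.
move: ne; rewrite -E size_drop; rewrite ltnS in lt.
by rewrite subKn // eqxx.
Qed.

Variable I : fpoly K n -> Prop.
Hypothesis HI : graded_ideal I.

Lemma I0 : I (fun _ => 0).
Proof. by case: HI. Qed.

Lemma Isum (T : Type) (r : seq T) (F : T -> fpoly K n) :
  (forall t, I (F t)) -> I (fun x => \sum_(t <- r) F t x).
Proof.
move=> HF; elim: r => [|t r IH].
  have -> : (fun x : seq 'I_n => \sum_(t <- [::]) F t x) = (fun _ => 0).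
    by apply: functional_extensionality => x; rewrite big_nil.
  exact: I0.
have -> : (fun x : seq 'I_n => \sum_(t0 <- t :: r) F t0 x) =
          (fun x => F t x + \sum_(t0 <- r) F t0 x).
  by apply: functional_extensionality => x; rewrite big_cons.
by case: HI => _ _ Hadd _ _; apply: Hadd.
Qed.

Definition lam (u : mono n) (c : K) k e j (a : k.-tuple 'I_n) (b : j.-tuple 'I_n) : K :=
  if perm_eq u (zip a (iota 0 k) ++ zip b (iota (k + e) j)) then c else 0.

Definition Tsum (u : mono n) (c : K) (f0 : fpoly K n) k e j : fpoly K n :=
  fun x => \sum_(a : k.-tuple 'I_n) \sum_(b : j.-tuple 'I_n)
      fmul (fmul (dl (lam u c e a b) a) f0) (dl 1 b) x.

Lemma I_Tsum u c f0 k e j : I f0 -> I (Tsum u c f0 k e j).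
Proof.
move=> Hf0; apply: Isum => a; apply: Isum => b.
case: HI => _ _ _ Hmul _.
have [H1 _] := Hmul _ _ (is_F_dl (lam u c e a b) a) Hf0.
by have [_ H2] := Hmul _ _ (is_F_dl 1 b) H1.
Qed.

Lemma Tsum_eval u c f0 k e j (w : seq 'I_n) : size w = (k + e + j)%N ->
  Tsum u c f0 k e j w =
  (if perm_eq u (zip (take k w) (iota 0 k) ++ zip (drop (k + e) w) (iota (k + e) j))
   then c else 0) * f0 (take e (drop k w)).
Proof.
move=> Hw.
have HB : size (drop (k + e) w) == j by rewrite size_drop Hw addKn.
have HA : size (take k w) == k by rewrite size_takel // Hw -addnA leq_addr.
have Hwj : (size w - j = k + e)%N by rewrite Hw addnK.
have Ht1 : take k (take (k + e) w) = take k w by rewrite take_takel // leq_addr.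
have Ht2 : drop k (take (k + e) w) = take e (drop k w) by rewrite take_drop addnC.
have inner : forall a : k.-tuple 'I_n,
   \sum_(b : j.-tuple 'I_n) fmul (fmul (dl (lam u c e a b) a) f0) (dl 1 b) w =
   if take k w == a then lam u c e a (Tuple HB) * f0 (take e (drop k w)) else 0.
  move=> a; rewrite (bigD1 (Tuple HB)) //= big1 ?addr0.
    by rewrite fmul_dl_r (eqP HB) Hwj eqxx mulr1 fmul_dl_l size_tuple Ht1 Ht2.
  move=> b Hb; rewrite fmul_dl_r size_tuple Hwj.
  case: eqP => // E; case/negP: Hb; apply/eqP; apply: val_inj => /=; by rewrite E.
rewrite /Tsum (eq_bigr _ (fun a _ => inner a)) (bigD1 (Tuple HA)) //= eqxx big1 ?addr0 //.
move=> a Ha; case: eqP => // E; case/negP: Ha; apply/eqP; apply: val_inj => /=; by rewrite E.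
Qed.

End FP.

Section QS.
Variables (K : fieldType) (n : nat).
Local Open Scope ring_scope.

Lemma all_in_cat (T : Type) (P : T -> Prop) (l1 l2 : seq T) :
  all_in P l1 -> all_in P l2 -> all_in P (l1 ++ l2).
Proof. by elim: l1 => //= a l IH [Ha Hl] H2; split => //; apply: IH. Qed.

Lemma genP_add (S : ppoly K n -> Prop) p q :
  genP S p -> genP S q -> genP S (fun m => p m + q m).
Proof.
move=> [l1 [H1 E1]] [l2 [H2 E2]]; exists (l1 ++ l2); split; first exact: all_in_cat.
by move=> m; rewrite big_cat /= E1 E2.
Qed.

Lemma rep_col (m0 : mono n) : ~~ uniq (map snd m0) ->
  exists (x y : var n) (u : mono n), x.2 = y.2 /\ perm_eq m0 (x :: y :: u).
Proof.
elim: m0 => [|v r IH] //=; case: (boolP (v.2 \in map snd r)) => [H _|H /= Hu].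
  case/mapP: H => y yr Ey; exists v, y, (rem y r); split => //.
  by rewrite perm_cons; apply: perm_to_rem.
have [x [y [u [Exy Hp]]]] := IH Hu.
exists x, y, (v :: u); split => //.
apply: (@perm_trans _ (v :: x :: y :: u)); first by rewrite perm_cons.
by move: (perm_catCA [:: v] [:: x; y] u (x :: y :: v :: u)) => /= ->.
Qed.

Lemma mono_poly_Q (m0 u : mono n) (x y : var n) :
  perm_eq m0 (x :: y :: u) ->
  forall m, mono_poly K m0 m = 1 * mulmono u (mono_poly K [:: x; y]) m.
Proof.
move=> Hp m; rewrite mul1r /mono_poly /mulmono ((permPl Hp) m).
case: (boolP (perm_eq (x :: y :: u) m)) => H.
  by have [-> ->] := (PL [:: x; y] u m).1 H.
case: ifP => // Hd; case: ifP => // Hq; case/negP: H.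
by apply/(PL [:: x; y] u m).2.
Qed.

Lemma Qgen_col (x y : var n) : x.2 = y.2 -> Qgen (mono_poly K [:: x; y]).
Proof. by case: x y => i j [k j'] /= ->; exists i, k, j'. Qed.

Lemma Q0 (q : ppoly K n) m : Qideal q -> uniq (map snd m) -> q m = 0.
Proof.
move=> [l [Hl E]] Hu; rewrite E; elim: l Hl {E} => [|t l IH] /=; first by rewrite big_nil.
move=> [[i [k [j Eg]]] Hl]; rewrite big_cons IH // addr0 Eg /mulmono /mono_poly.
case: ifP; last by rewrite mulr0.
case: ifP; last by rewrite mulr0.
move=> H1 H2; have : perm_eq ([:: (i, j); (k, j)] ++ t.1.2) m by apply/PL.
move/(perm_map snd)/perm_uniq; rewrite Hu /= inE eqxx //.
Qed.

Lemma is_poly_perm (p : ppoly K n) m1 m2 : is_poly p -> perm_eq m1 m2 -> p m1 = p m2.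
Proof.
move=> [s E] H; rewrite !E; apply: eq_bigl => t; exact: (permPr H).
Qed.

Lemma is_poly_sub (p q : ppoly K n) : is_poly p -> is_poly q -> is_poly (fun m => p m - q m).
Proof.
move=> [s1 E1] [s2 E2]; exists (s1 ++ [seq (- t.1, t.2) | t <- s2]) => m.
by rewrite big_cat big_map /= sumrN E1 E2.
Qed.

Lemma is_poly_iota (f : fpoly K n) : is_F f -> is_poly (iotaLP f).
Proof.
move=> [s Hs]; exists [seq (f w, zip w (iota 0 (size w))) | w <- undup s] => m.
rewrite big_map /=.
case: (classic (exists x : seq 'I_n, perm_eq (zip x (iota 0 (size x))) m)) => [[x Hx]|Hn].
  rewrite (iota_at f Hx).
  rewrite (eq_bigl (fun w => w == x)); last first.
    move=> w /=; apply/idP/eqP => [Hw|->//].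
    have Hsz : size w = size x.
      by rewrite -(size_zip_iota w 0) -(size_zip_iota x 0) (perm_size Hw) (perm_size Hx).
    apply: (@zip_iota_inj _ _ _ 0) => // z zw.
    by rewrite (perm_mem Hx) -(perm_mem Hw).
  rewrite -big_filter; case: (boolP (x \in s)) => xs.
    by rewrite filter_pred1_uniq ?undup_uniq ?mem_undup // big_seq1.
  rewrite big1_seq ?Hs // => w /andP[_]; rewrite mem_filter => /andP[/eqP -> _]; exact: Hs.
rewrite big1_seq; last first.
  by move=> w /andP[Hw _]; case: Hn; exists w.
apply/eqP; apply/negPn/negP => /iota_nz [x [_ Hx _]]; apply: Hn; by exists x.
Qed.

Lemma QP (D : ppoly K n) : is_poly D -> (forall m, uniq (map snd m) -> D m = 0) -> Qideal D.
Proof.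
move=> [s E] Hv.
set sb := filter (fun t : K * mono n => ~~ uniq (map snd t.2)) s.
have E2 : forall m, D m = \sum_(t <- sb | perm_eq t.2 m) t.1.
  move=> m; rewrite big_filter_cond; case: (boolP (uniq (map snd m))) => Hm.
    rewrite Hv // big1 // => t /andP[Ht Hp]; move: Ht.
    by rewrite (perm_uniq (perm_map snd Hp)) Hm.
  rewrite E; apply: eq_bigl => t; case: (boolP (perm_eq t.2 m)) => Hp; last by rewrite andbF.
  by rewrite (perm_uniq (perm_map snd Hp)) Hm.
have Hall : all (fun t : K * mono n => ~~ uniq (map snd t.2)) sb by apply: filter_all.
suff [l [Hl El]] : exists l : seq (K * mono n * ppoly K n), all_in (fun t : K * mono n * ppoly K n => Qgen t.2) l /\
    forall m, \sum_(t <- sb | perm_eq t.2 m) t.1 = \sum_(t <- l) t.1.1 * mulmono t.1.2 t.2 m.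
  by exists l; split => // m; rewrite E2 El.
elim: sb Hall {E2} => [|t r IH] /=.
  by move=> _; exists [::]; split => // m; rewrite !big_nil.
move=> /andP[Ht Hr]; have [l [Hl El]] := IH Hr.
have [x [y [u [Exy Hp]]]] := rep_col Ht.
exists ((t.1, u, mono_poly K [:: x; y]) :: l); split; first by split => //; exact: Qgen_col.
move=> m; rewrite !big_cons El /=.
have := mono_poly_Q Hp m; rewrite /mono_poly mul1r => <-.
by case: ifP; rewrite ?mulr1 ?mulr0 ?add0r.
Qed.

Lemma pigeon (m : mono n) d : uniq (map snd m) -> size m = d ->
  all (fun v : var n => (v.2 < d)%N) m ->
  exists w : seq 'I_n, size w = d /\ perm_eq (zip w (iota 0 d)) m.
Proof.
move=> Hu Hs Ha.
set s := sort (fun x y : var n => (x.2 <= y.2)%N) m.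
have Hps : perm_eq s m by rewrite perm_sort.
have Hpi : perm_eq (map snd m) (iota 0 d).
  have [Hsz Hmem] := @uniq_min_size _ (map snd m) (iota 0 d) Hu
    ltac:(move=> i /mapP [v vm ->]; rewrite mem_iota /=; exact: (allP Ha v vm))
    ltac:(by rewrite size_iota size_map Hs).
  by apply: uniq_perm => //; exact: iota_uniq.
have Hsnd : map snd s = iota 0 d.
  rewrite /s -sort_map.
  rewrite (perm_sortP leq_total leq_trans anti_leq _ _ Hpi).
  by apply: sorted_sort; [exact: leq_trans | exact: iota_sorted].
exists (map fst s); split; first by rewrite size_map (perm_size Hps).
by rewrite -Hsnd (zip_unzip s).
Qed.

Lemma iota_supp (f : fpoly K n) d m : homogF d f -> iotaLP f m != 0 ->
  size m = d /\ all (fun v : var n => (v.2 < d)%N) m.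
Proof.
move=> Hh /iota_nz [x [Hsx Hx Hf]]; have Hd := Hh _ Hf.
split; first by rewrite -Hsx.
rewrite -(perm_all _ Hx); apply/allP => -[a i]; rewrite mem_zip_iota Hd.
by case/andP => /andP[_ h] _.
Qed.

End QS.

Section MainS.
Variables (K : fieldType) (n : nat) (I : fpoly K n -> Prop).
Hypothesis HI : graded_ideal I.
Variable d : nat.
Local Open Scope ring_scope.

Lemma uniq_snd_zip (w : seq 'I_n) : size w = d -> uniq (map snd (zip w (iota 0 d))).
Proof.
move=> Hw; have := unzip2_zip (s := w) (t := iota 0 d); rewrite /unzip2 => ->.
  exact: iota_uniq.
by rewrite size_iota Hw.
Qed.

Lemma GenCase (u : mono n) c k (f0 : fpoly K n) : I f0 ->
  (k <= size u)%N -> (size u <= d)%N ->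
  exists h, I h /\ forall w : seq 'I_n, size w = d ->
    h w = c * mulmono u (iter k (@sigma K n) (iotaLP f0)) (zip w (iota 0 d)).
Proof.
move=> Hf0 h1 h2; exists (Tsum u c f0 k (d - size u) (size u - k)); split.
  exact: I_Tsum.
move=> w Hw; rewrite Tsum_eval; last by rewrite Hw; lia.
rewrite -Hw Vformula //; last by rewrite Hw.
have Hj : (size w - (k + (size w - size u)) = size u - k)%N by rewrite Hw; lia.
rewrite /Ufun Hj; case: ifP => _; by rewrite ?mulr0 ?mul0r.
Qed.

Lemma gen_rep (g : ppoly K n) (u : mono n) c :
  (Qgen g \/ exists k (f0 : fpoly K n), I f0 /\ g = iter k (@sigma K n) (iotaLP f0)) ->
  exists h, I h /\ forall w : seq 'I_n, size w = d ->
    h w = c * mulmono u g (zip w (iota 0 d)).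
Proof.
case => [Hg | [k [f0 [Hf0 ->]]]].
  exists (fun _ => 0); split; first exact: I0.
  move=> w Hw; rewrite (@Q0 _ _ (mulmono u g)) ?mulr0 //; last exact: uniq_snd_zip.
  exists [:: (1, u, g)]; split => //= m; by rewrite big_seq1 mul1r.
case: (ltnP d (size u)) => hud.
  exists (fun _ => 0); split; first exact: I0.
  by move=> w Hw; rewrite -Hw V_big ?mulr0 // Hw.
case: (leqP k (size u)) => hk; first exact: GenCase.
case: (boolP (size u == d)) => /eqP hd.
  have [h [Ih Eh]] := GenCase c Hf0 (leqnn (size u)) hud.
  exists h; split => // w Hw; rewrite Eh // -Hw (@V_e0 _ _ w u (size u) k) //.
  by rewrite hd.
exists (fun _ => 0); split; first exact: I0.
move=> w Hw; rewrite -Hw V_kbig ?mulr0 // Hw; lia.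
Qed.

Lemma list_rep (l : seq (K * mono n * ppoly K n)) :
  all_in (fun t : K * mono n * ppoly K n => Qgen t.2 \/
     exists k (f0 : fpoly K n), I f0 /\ t.2 = iter k (@sigma K n) (iotaLP f0)) l ->
  exists f, I f /\ forall w : seq 'I_n, size w = d ->
    f w = \sum_(t <- l) t.1.1 * mulmono t.1.2 t.2 (zip w (iota 0 d)).
Proof.
elim: l => [|t l IH] /=.
  move=> _; exists (fun _ => 0); split; first exact: I0.
  by move=> w _; rewrite big_nil.
move=> [Ht Hl]; have [f [If Ef]] := IH Hl.
have [h [Ih Eh]] := gen_rep t.1.2 t.1.1 Ht.
exists (fun w => h w + f w); split.
  by case: HI => _ _ Hadd _ _; apply: Hadd.
by move=> w Hw; rewrite big_cons Eh // Ef.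
Qed.

End MainS.

Lemma fhom_I (K : fieldType) (n : nat) (I : fpoly K n -> Prop) d f :
  graded_ideal I -> I f -> I (fhom d f).
Proof. by case=> _ _ _ _ H /H. Qed.

Lemma all_in_impl (T : Type) (P Q : T -> Prop) l :
  (forall x, P x -> Q x) -> all_in P l -> all_in Q l.
Proof. by move=> H; elim: l => //= a l IH [Ha Hl]; split; [apply: H | apply: IH]. Qed.

Local Open Scope ring_scope.

Unset Implicit Arguments.
Theorem mainTheorem5 (K : fieldType) (n : nat) (I : fpoly K n -> Prop)
  (HI : graded_ideal I) (d : nat) :
  (forall r : ppoly K n, is_poly r ->
     ((LIpre I r /\ exists p, inPdd d p /\ eqQ r p) <->
      exists f, I f /\ homogF d f /\ eqQ r (iotaLP f)))
  /\
  (forall f g : fpoly K n, I f -> I g -> homogF d f -> homogF d g ->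
     eqQ (iotaLP f) (iotaLP g) -> forall w, f w = g w).
Proof.
have IF : forall f, I f -> is_F f by case: HI.
split.
  move=> r Hr; split.
    move=> [[l [Hl El]] [p [[Hpp Hsupp] HQ]]].
    have [f [If Ef]] := list_rep HI d Hl.
    set f' := fhom d f.
    have If' : I f' by apply: fhom_I.
    have Hh : homogF d f'.
      move=> w; rewrite /f' /fhom; case: ifP => [/eqP //|_]; rewrite eqxx //.
    exists f'; split; first exact: If'.
    split; first exact: Hh.
    have HQ2 : Qideal (fun m => p m - iotaLP f' m).
      apply: QP; first by apply: is_poly_sub => //; apply: is_poly_iota; apply: IF.
      move=> m Hum.
      case: (boolP ((size m == d) && all (fun v : var n => (v.2 < d)%N) m)).
        case/andP => /eqP Hsm Hall.
        have [w [Hw Hpw]] := pigeon Hum Hsm Hall.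
        rewrite -(is_poly_perm Hpp Hpw).
        have Hiw : perm_eq (zip w (iota 0 (size w))) m by rewrite Hw.
        rewrite (iota_at f' Hiw).
        have := Q0 HQ (uniq_snd_zip Hw); rewrite El -Ef // => /eqP.
        by rewrite subr_eq0 => /eqP <-; rewrite /f' /fhom Hw eqxx subrr.
      move=> Hn.
      have -> : p m = 0.
        apply/eqP; apply/negPn/negP => /Hsupp [H1 H2]; case/negP: Hn.
        by rewrite H1 eqxx H2.
      have -> : iotaLP f' m = 0.
        apply/eqP; apply/negPn/negP => /(iota_supp Hh) [H1 H2]; case/negP: Hn.
        by rewrite H1 eqxx H2.
      by rewrite subrr.
    rewrite /eqQ; have -> : (fun m => r m - iotaLP f' m) = (fun m => (r m - p m) + (p m - iotaLP f' m)).
      by apply: functional_extensionality => m; rewrite addrA subrK.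
    exact: genP_add.
  move=> [f [If [Hh HQ]]]; split.
    case: (HQ) => l [Hl El].
    exists (l ++ [:: (1, [::], iotaLP f)]); split.
      apply: all_in_cat; first by apply: all_in_impl Hl => t Ht; left.
      by split => //; right; exists 0%N, f.
    move=> m; rewrite big_cat big_seq1 /= -El mul1r /mulmono /=.
    by rewrite subrK.
  exists (iotaLP f); split => //; split; first by apply: is_poly_iota; apply: IF.
  by move=> m /(iota_supp Hh).
move=> f g If Ig Hf Hg HQ w.
case: (boolP (size w == d)) => [/eqP Hw|Hw].
  rewrite -(iota_at f (perm_refl _)) -(iota_at g (perm_refl _)).
  apply/eqP; rewrite -subr_eq0; apply/eqP.
  by apply: (Q0 HQ); rewrite Hw; apply: uniq_snd_zip.
have -> : f w = 0 by apply/eqP; apply/negPn/negP => /Hf E; rewrite E eqxx in Hw.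
have -> : g w = 0 by apply/eqP; apply/negPn/negP => /Hg E; rewrite E eqxx in Hw.
done.
Qed.
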